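(* Let $m\le k\le n$ be positive integers, $\mathbf a_1,\dots,\mathbf a_n\in\mathbb R^m$. For a multiset $\mathcal R$ with support in $[n]$ let $f(\mathcal R)=[\det(\sum_{i\in\mathcal R}\mathbf a_i\mathbf a_i^\top)]^{1/m}$ (sum with multiplicity), and let $w^*=\max\{[\det(\sum_{i\in[n]}x_i\mathbf a_i\mathbf a_i^\top)]^{1/m}:\sum_ix_i=k,\ \mathbf x\in\mathbb Z_+^n\}$ be the optimal value of the $D$-optimal design problem with repetitions. Let $\hat{\mathbf x}\in\mathbb Q_+^n$ be a rational optimal solution of the relaxation $\max\{[\det(\sum_{i\in[n]}x_i\mathbf a_i\mathbf a_i^\top)]^{1/m}:\sum_ix_i=k,\ \mathbf x\in\mathbb R_+^n\}$. Let $\mathcal S$ be the random multiset obtained by $k$ independent draws from $[n]$, each equal to $i$ with probability $\hat x_i/k$. Let $q$ be a positive integer with $q\hat x_i\in\mathbb Z_+$ for all $i$, let $\mathcal A_q$ be a collection of $qk$ distinct items of which exactly $q\hat x_i$ carry label $i$, choose a uniformly random $k$-element subset of $\mathcal A_q$, and let $\mathcal S_q$ be the multiset of labels of the chosen items. Then $$\big(\mathbb E[(f(\mathcal S_q))^m]\big)^{1/m}\ge\big(\mathbb E[(f(\mathcal S))^m]\big)^{1/m}\ge g(m,k)^{-1}w^*,$$ where $$g(m,k)=\Big[\frac{(k-m)!\,k^m}{k!}\Big]^{1/m}\le\min\Big\{e,\ \frac{k}{k-m+1}\Big\}.$$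
   Context: $[n]=\{1,\dots,n\}$, $\mathbb Q_+$ the nonnegative rationals, $\mathbb Z_+$ the nonnegative integers, $\mathbb R_+$ the nonnegative reals. *)

(* Defs.v *)
From HB Require Import structures.
From mathcomp Require Import all_boot all_order all_algebra.
From mathcomp Require Import reals exp sequences.
Set Implicit Arguments. Unset Strict Implicit. Unset Printing Implicit Defensive.
Import Order.TTheory GRing.Theory Num.Theory.
Local Open Scope ring_scope.

Section Defs.
Variables (R : realType) (m n : nat).

Definition outer (v : 'cV[R]_m) : 'M[R]_m := v *m v^T.

(* f(R) = [det (sum_{i in R} a_i a_i^T)]^{1/m}, R a multiset given as a seq (with multiplicity) *)
Definition fdet (a : 'I_n -> 'cV[R]_m) (s : seq 'I_n) : R :=
  powR (\det (\sum_(i <- s) outer (a i))) (m%:R^-1).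

Definition design_obj (a : 'I_n -> 'cV[R]_m) (x : 'I_n -> R) : R :=
  powR (\det (\sum_(i < n) x i *: outer (a i))) (m%:R^-1).

(* w^* : maximum of the objective over x in Z_+^n with sum_i x_i = k
   (each coordinate then lies in {0..k}); the objective is >= 0, so the
   big max with default 0 is the true maximum. *)
Definition wstar (a : 'I_n -> 'cV[R]_m) (k : nat) : R :=
  \big[Num.max/0]_(x : {ffun 'I_n -> 'I_k.+1} | (\sum_i (x i : nat) == k)%N)
     design_obj a (fun i => (x i : nat)%:R).

(* E[(f(S))^m], S = k independent draws, each equal to i with prob xh_i / k *)
Definition E_indep (a : 'I_n -> 'cV[R]_m) (k : nat) (xh : 'I_n -> R) : R :=
  \sum_(s : {ffun 'I_k -> 'I_n})
     (\prod_(j < k) (xh (s j) / k%:R)) * (fdet a [seq s j | j <- enum 'I_k]) ^+ m.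

(* E[(f(S_q))^m], S_q = labels of a uniformly random k-subset of the qk items
   'I_(q*k) labelled by lab *)
Definition E_sub (a : 'I_n -> 'cV[R]_m) (k q : nat) (lab : 'I_(q * k) -> 'I_n) : R :=
  \sum_(T : {set 'I_(q * k)} | #|T| == k)
     ('C(q * k, k)%:R)^-1 * (fdet a [seq lab t | t <- enum T]) ^+ m.

Definition gmk (k : nat) : R :=
  powR (((k - m)`! * k ^ m)%:R / (k`!)%:R) (m%:R^-1).

End Defs.

(* Main.v *)
Require Import Defs.
From HB Require Import structures.
From mathcomp Require Import all_boot all_order all_algebra.
From mathcomp Require Import reals exp sequences.
From mathcomp Require Import fingroup perm zify ring.
Import Order.TTheory GRing.Theory Num.Theory.

Module Helpers.
Set Implicit Arguments. Unset Strict Implicit. Unset Printing Implicit Defensive.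

Lemma count_sup (I : finType) (B : {set I}) k : #|B| <= k ->
  #|[set T : {set I} | (B \subset T) && (#|T| == k)]| = 'C(#|I| - #|B|, k - #|B|).
Proof.
move=> Bk.
pose D := [set A : {set I} | A \subset ~: B & #|A| == k - #|B|].
have -> : [set T : {set I} | (B \subset T) && (#|T| == k)] = (fun A => A :|: B) @: D.
  apply/setP => T; rewrite inE; apply/andP/imsetP.
    case=> sBT /eqP cT; exists (T :\: B).
      by rewrite inE subsetDr cardsDS // cT eqxx.
    apply/setP => x; rewrite !inE.
    by case: (boolP (x \in B)) => xB; rewrite ?orbT ?orbF ?andbT //= (subsetP sBT).
  case=> A; rewrite inE => /andP [sAB /eqP cA] ->; split; first exact: subsetUr.
  have dAB : [disjoint A & B] by rewrite disjoints_subset.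
  rewrite -setI_eq0 in dAB.
  rewrite cardsU cA (eqP dAB) cards0; apply/eqP; lia.
rewrite card_in_imset.
  rewrite cards_draws; congr 'C(_, _).
  have := cardsC B; lia.
move=> A1 A2; rewrite !inE => /andP[s1 _] /andP[s2 _] E.
apply/setP => x; have := congr1 (fun S : {set I} => x \in S) E; rewrite /= !inE.
have := subsetP s1 x; have := subsetP s2 x; rewrite !inE.
case: (x \in A1); case: (x \in A2); case: (x \in B) => //= H1 H2 H3;
  try (by have := H1 isT); by have := H2 isT.
Qed.


Lemma bin_ffact_id n k m : m <= k -> k <= n ->
  'C(n, k) * k ^_ m = 'C(n - m, k - m) * n ^_ m.
Proof.
move=> mk kn.
have f1 := fact_gt0 (k - m); have f2 := fact_gt0 (n - k).
have f12 : (0 < (k - m)`! * (n - k)`!)%N by rewrite muln_gt0 f1 f2.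
apply/eqP; rewrite -(eqn_pmul2r f12); apply/eqP.
transitivity (n`!).
  rewrite -(bin_fact kn) -(ffact_fact mk); ring.
rewrite -(ffact_fact (leq_trans mk kn)).
have e : n - k = (n - m) - (k - m) by lia.
rewrite e -(bin_fact (_ : k - m <= n - m)); last by lia.
ring.
Qed.

Lemma ffact_le_exp n m : n ^_ m <= n ^ m.
Proof.
elim: m => [|m IH]; first by [].
by rewrite ffactnSr expnSr leq_mul // leq_subr.
Qed.

Lemma exp_le_ffact k m : m <= k -> (k - m + 1) ^ m <= k ^_ m.
Proof.
move=> mk.
suff H : forall j, j <= m -> (k - m + 1) ^ j <= k ^_ j by apply: H.
elim=> [|j IH] jm; first by [].
rewrite ffactnSr expnSr leq_mul // ?IH //; [exact: ltnW | lia].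
Qed.

Lemma exp_le_exp a b e : a <= b -> a ^ e <= b ^ e.
Proof. by move=> ab; elim: e => [|e IH] //; rewrite !expnS leq_mul. Qed.


Local Open Scope ring_scope.


Section Gen.
Variables (R : comRingType) (m : nat).

Lemma det_sum_exp (J : finType) (N : J -> 'M[R]_m) :
  \det (\sum_j N j) =
  \sum_(phi : {ffun 'I_m -> J}) \det (\matrix_(r, c) N (phi r) r c).
Proof.
rewrite /determinant.
under eq_bigr => s _.
  under eq_bigr => i _ do rewrite summxE.
  rewrite bigA_distr_bigA mulr_sumr.
  over.
rewrite exchange_big /=; apply: eq_bigr => phi _.
by apply: eq_bigr => s _; congr (_ * _); apply: eq_bigr => i _; rewrite mxE.
Qed.

Lemma det_rowscale (d : 'I_m -> R) (B : 'M[R]_m) :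
  \det (\matrix_(r, c) (d r * B r c)) = (\prod_r d r) * \det B.
Proof.
rewrite /determinant mulr_sumr; apply: eq_bigr => s _.
rewrite mulrCA; congr (_ * _).
by rewrite -big_split; apply: eq_bigr => i _; rewrite mxE.
Qed.

End Gen.


Section Gram.
Variables (R : realDomainType) (m : nat).

Lemma gram_ge0 (J : finType) (v : J -> 'cV[R]_m) (w : J -> R) :
  (forall j, 0 <= w j) -> 0 <= \det (\sum_j w j *: (v j *m (v j)^T)).
Proof.
move=> w0.
rewrite det_sum_exp.
pose beta (phi : {ffun 'I_m -> J}) := \det (\matrix_(r, c) v (phi r) c 0).
pose gam (phi : {ffun 'I_m -> J}) := \prod_r (w (phi r) * v (phi r) r 0).
have E1 : forall phi : {ffun 'I_m -> J},
  \det (\matrix_(r, c) (w (phi r) *: (v (phi r) *m (v (phi r))^T)) r c)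
  = gam phi * beta phi.
  move=> phi; rewrite -det_rowscale; congr (determinant _); apply/matrixP => r c.
  by rewrite !mxE big_ord1 !mxE mulrA.
under eq_bigr => phi _ do rewrite E1.
set S := \sum_phi _.
have E2 : forall (s : 'S_m), S = \sum_(phi : {ffun 'I_m -> J})
    gam [ffun r => phi (s r)] * ((-1) ^+ s * beta phi).
  move=> s; rewrite /S (reindex_inj (h := fun phi : {ffun 'I_m -> J} => [ffun r => phi (s r)])).
    apply: eq_bigr => phi _; congr (_ * _).
    rewrite /beta.
    have -> : (\matrix_(r, c) v ([ffun r0 => phi (s r0)] r) c 0) =
       row_perm s (\matrix_(r, c) v (phi r) c 0).
      by apply/matrixP => r c; rewrite !mxE ffunE.
    by rewrite row_permE det_mulmx det_perm.
  move=> f g /ffunP fg; apply/ffunP => r.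
  by have := fg ((s^-1)%g r); rewrite !ffunE permKV.
have E3 : (m`!)%:R * S = \sum_(phi : {ffun 'I_m -> J})
    (\prod_r w (phi r)) * beta phi ^+ 2.
  rewrite mulr_natl -card_Sn -sumr_const.
  rewrite (eq_bigr (fun s : 'S_m => \sum_(phi : {ffun 'I_m -> J}) gam [ffun r => phi (s r)] * ((-1) ^+ s * beta phi))); last by move=> s _; apply: E2.
  rewrite exchange_big /=; apply: eq_bigr => phi _.
  have -> : \sum_(s : 'S_m) gam [ffun r => phi (s r)] * ((-1) ^+ s * beta phi)
     = \det (\matrix_(r, c) (w (phi c) * v (phi c) r 0)) * beta phi.
    rewrite /determinant mulr_suml; apply: eq_bigr => s _.
    rewrite mulrA [gam _ * _]mulrC; congr (_ * _ * _).
    by apply: eq_bigr => r _; rewrite !mxE ffunE.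
  rewrite -det_tr.
  have -> : (\matrix_(r, c) (w (phi c) * v (phi c) r 0))^T =
     \matrix_(c, r) (w (phi c) * (\matrix_(i, j) v (phi i) j 0) c r).
    by apply/matrixP => i j; rewrite !mxE.
  by rewrite det_rowscale expr2 mulrA.
have : 0 <= (m`!)%:R * S.
  by rewrite E3; apply: sumr_ge0 => phi _; apply: mulr_ge0;
   [apply: prodr_ge0 => r _; apply: w0 | apply: sqr_ge0].
by rewrite pmulr_rge0 // ltr0n fact_gt0.
Qed.
End Gram.


Section Fact.
Variable R : comRingType.

Lemma prod_pick (k m : nat) (phi : 'I_m -> 'I_k) (F : 'I_k -> 'I_m -> R) :
  injective phi ->
  \prod_(j < k) (if [pick r | phi r == j] is Some r then F j r else 1)
  = \prod_(r < m) F (phi r) r.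
Proof.
move=> inj.
pose G j := if [pick r | phi r == j] is Some r then F j r else 1.
have HG : forall r, G (phi r) = F (phi r) r.
  move=> r; rewrite /G; case: pickP => [r' /eqP /inj -> // | /(_ r)].
  by rewrite eqxx.
rewrite -/(\prod_(j < k) G j).
rewrite (bigID (fun j => j \in phi @: [set: 'I_m])) /=.
rewrite [X in _ * X]big1 ?mulr1; last first.
  move=> j Hj; rewrite /G; case: pickP => [r /eqP Hr | //].
  by move: Hj; rewrite -Hr imset_f ?in_setT.
rewrite big_imset /=; last by move=> x y _ _; apply: inj.
under eq_bigr => r _ do rewrite HG.
by apply: eq_bigl => r; rewrite in_setT.
Qed.

Lemma indep_factor (k m n : nat) (phi : 'I_m -> 'I_k) (p : 'I_n -> R)
   (g : 'I_m -> 'I_n -> R) :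
  injective phi -> \sum_i p i = 1 ->
  \sum_(s : {ffun 'I_k -> 'I_n}) (\prod_j p (s j)) * \prod_r g r (s (phi r))
  = \prod_r \sum_i p i * g r i.
Proof.
move=> inj p1.
transitivity (\sum_(s : {ffun 'I_k -> 'I_n}) \prod_j (p (s j) *
   (if [pick r | phi r == j] is Some r then g r (s j) else 1))).
  apply: eq_bigr => s _; rewrite big_split /=; congr (_ * _).
  by rewrite (prod_pick (fun j r => g r (s j)) inj).
rewrite -(bigA_distr_bigA (fun j i => p i *
   (if [pick r | phi r == j] is Some r then g r i else 1))) /=.
rewrite -(prod_pick (fun j r => \sum_i p i * g r i) inj).
apply: eq_bigr => j _; case: pickP => [r _ //|_].
by under eq_bigr do rewrite mulr1.
Qed.

End Fact.


Lemma prod_ind (R : comRingType) m (b : 'I_m -> bool) :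
  \prod_r (b r)%:R = ([forall r, b r])%:R :> R.
Proof.
case: (boolP [forall r, b r]) => [/forallP H | /forallPn [r Hr]].
  by apply: big1 => r _; rewrite H.
by rewrite (bigD1 r) //= (negbTE Hr) mul0r.
Qed.

Lemma count_inj (R : comRingType) (I : finType) m k (phi : 'I_m -> I) :
  injective phi -> (m <= k)%N ->
  \sum_(T : {set I} | #|T| == k) \prod_r (phi r \in T)%:R
  = ('C(#|I| - m, k - m))%:R :> R.
Proof.
move=> inj mk.
have cB : #|phi @: [set: 'I_m]| = m by rewrite card_imset // cardsT card_ord.
rewrite (eq_bigr (fun T : {set I} => ((phi @: [set: 'I_m]) \subset T)%:R)); last first.
  move=> T _; rewrite prod_ind; congr ((nat_of_bool _)%:R).
  apply/idP/idP => [/forallP H | /subsetP H].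
    by apply/subsetP => _ /imsetP [r _ ->]; exact: H.
  by apply/forallP => r; apply: H; rewrite imset_f ?in_setT.
have -> : 'C(#|I| - m, k - m) =
   #|[set T : {set I} | ((phi @: [set: 'I_m]) \subset T) && (#|T| == k)]|.
  by rewrite count_sup cB.
rewrite -sum1_card natr_sum.
rewrite [RHS](eq_bigl (fun T : {set I} => (#|T| == k) && ((phi @: [set: 'I_m]) \subset T))); last first.
  by move=> T; rewrite inE andbC.
rewrite big_mkcondr /=; apply: eq_bigr => T _.
by case: (_ \subset T).
Qed.


Section Re.
Variable R : realType.

Lemma le_e (u : nat) : (u.+1%:R : R) ^+ u <= expR 1 * (u%:R) ^+ u.
Proof.
case: u => [|u]; first by rewrite !expr0 mulr1; apply: le_trans (expR_ge1Dx 1); rewrite lerDl.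
set v := u.+1.
have v0 : (0 : R) < v%:R by rewrite ltr0n.
have -> : (v.+1%:R : R) = v%:R * (1 + v%:R^-1).
  by rewrite mulrDr mulr1 mulfV ?gt_eqF // -natr1 addrC.
rewrite exprMn mulrC ler_pM2r ?exprn_gt0 //.
apply: (le_trans (y := (expR (v%:R^-1)) ^+ v)).
  apply: lerXn2r; rewrite ?nnegrE ?addr_ge0 ?invr_ge0 ?ler0n ?expR_ge0 //.
  exact: expR_ge1Dx.
by rewrite -expRM_natr mulVf ?gt_eqF.
Qed.

Lemma ffact_e (k m : nat) : (m <= k)%N ->
  (k%:R : R) ^+ m <= expR 1 ^+ m * (k ^_ m)%:R.
Proof.
move=> mk.
have H : forall j, (j <= k)%N ->
   (k%:R : R) ^+ k <= expR 1 ^+ j * (k ^_ j)%:R * ((k - j)%:R) ^+ (k - j).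
  elim=> [|j IH] jk; first by rewrite expr0 mul1r ffactn0 mul1r subn0.
  apply: (le_trans (IH (ltnW jk))).
  have kj : (k - j = (k - j.+1).+1)%N by lia.
  rewrite ffactnSr kj; set t := (k - j.+1)%N.
  have -> : expR 1 ^+ j * (k ^_ j)%:R * (t.+1%:R) ^+ t.+1 =
     (expR 1 ^+ j * (k ^_ j)%:R * t.+1%:R) * (t.+1%:R ^+ t) :> R.
    by rewrite exprS; ring.
  have -> : expR 1 ^+ j.+1 * (k ^_ j * t.+1)%:R * t%:R ^+ t =
     (expR 1 ^+ j * (k ^_ j)%:R * t.+1%:R) * (expR 1 * t%:R ^+ t) :> R.
    by rewrite exprS natrM; ring.
  by rewrite ler_wpM2l ?mulr_ge0 ?exprn_ge0 ?expR_ge0 ?ler0n // le_e.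
have := H m mk.
have -> : (k%:R : R) ^+ k = k%:R ^+ m * k%:R ^+ (k - m).
  by rewrite -exprD subnKC.
move=> H2.
have P : (0 : R) < ((k - m)%:R) ^+ (k - m).
  rewrite -natrX ltr0n expn_gt0; case: (k - m)%N => //= ?; lia.
rewrite -(ler_pM2r P); apply: le_trans H2.
rewrite ler_wpM2l ?exprn_ge0 ?ler0n // -!natrX ler_nat.
apply: exp_le_exp; lia.
Qed.

End Re.


Section Main.
Variables (R : realType) (m n : nat) (a : 'I_n -> 'cV[R]_m).

Definition Dd (psi : 'I_m -> 'I_n) :=
  \det (\matrix_(r, c) outer (a (psi r)) r c).

Lemma outerE (v : 'cV[R]_m) r c : outer v r c = v r 0 * v c 0.
Proof. by rewrite /outer !mxE big_ord1 !mxE. Qed.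

Lemma Dd0 (psi : 'I_m -> 'I_n) r1 r2 : r1 != r2 -> psi r1 = psi r2 -> Dd psi = 0.
Proof.
move=> ne eq; rewrite /Dd.
have -> : \matrix_(r, c) outer (a (psi r)) r c =
  \matrix_(r, c) (a (psi r) r 0 * (\matrix_(i, j) a (psi i) j 0) r c).
  by apply/matrixP => r c; rewrite !mxE big_ord1 !mxE.
rewrite det_rowscale (determinant_alternate ne) ?mulr0 //.
by move=> j; rewrite !mxE eq.
Qed.

Lemma Dd_inj (psi : {ffun 'I_m -> 'I_n}) : ~~ injectiveb psi -> Dd psi = 0.
Proof. by case/injectivePn => r1 [r2 ne eq]; apply: (Dd0 ne eq). Qed.

Lemma powR_pow (d : R) : (0 < m)%N -> 0 <= d -> (powR d (m%:R^-1)) ^+ m = d.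
Proof.
move=> m0 d0; rewrite -powR_mulrn ?powR_ge0 // -powRrM mulVf ?powRr1 //.
by rewrite pnatr_eq0 -lt0n.
Qed.

Lemma det_mix (w : 'I_n -> R) :
  \det (\sum_i w i *: outer (a i)) =
  \sum_(psi : {ffun 'I_m -> 'I_n}) (\prod_r w (psi r)) * Dd psi.
Proof.
rewrite det_sum_exp; apply: eq_bigr => psi _; rewrite /Dd -det_rowscale.
by congr (determinant _); apply/matrixP => r c; rewrite !mxE.
Qed.

Lemma Dd_leib (psi : 'I_m -> 'I_n) :
  Dd psi = \sum_(s : 'S_m) (-1) ^+ s * \prod_r outer (a (psi r)) r (s r).
Proof.
by rewrite /Dd /determinant; apply: eq_bigr => s _; under eq_bigr do rewrite mxE.
Qed.

Lemma Eindep_val (k : nat) (xh : 'I_n -> R) :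
  (0 < m)%N -> (forall i, 0 <= xh i) -> \sum_i xh i / k%:R = 1 ->
  E_indep a k xh = (k ^_ m)%:R * \det (\sum_i (xh i / k%:R) *: outer (a i)).
Proof.
move=> m0 x0 p1; rewrite /E_indep.
pose p i := xh i / k%:R.
have E1 : forall s : {ffun 'I_k -> 'I_n},
    fdet a [seq s j | j <- enum 'I_k] ^+ m =
    \sum_(phi : {ffun 'I_m -> 'I_k}) Dd (fun r => s (phi r)).
  move=> s; rewrite /fdet big_map big_enum /= powR_pow //; last first.
    rewrite (eq_bigr (fun j => 1 *: (a (s j) *m (a (s j))^T))); last first.
      by move=> j _; rewrite scale1r.
    exact: gram_ge0.
  by rewrite det_sum_exp.
under eq_bigr => s _ do rewrite E1 mulr_sumr.
rewrite exchange_big /=.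
rewrite (eq_bigr (fun phi : {ffun 'I_m -> 'I_k} => if injectiveb phi then
   \det (\sum_i p i *: outer (a i)) else 0)); last first.
  move=> phi _; case: injectiveP => [inj|ninj].
    under eq_bigr => s _ do rewrite Dd_leib mulr_sumr.
    rewrite exchange_big /= /determinant; apply: eq_bigr => sg _.
    under eq_bigr do rewrite mulrCA.
    rewrite -mulr_sumr; congr (_ * _).
    rewrite (indep_factor (fun r i => outer (a i) r (sg r)) inj p1).
    apply: eq_bigr => r _; rewrite summxE.
    apply: eq_bigr => i _.
    by rewrite [RHS]mxE.
    
  have /injectivePn [r1 [r2 ne eq]] : ~~ injectiveb phi by apply/injectiveP.
  by apply: big1 => s _; rewrite (@Dd0 (fun r => s (phi r)) r1 r2 ne) ?mulr0 //= eq.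
rewrite -big_mkcond /= sumr_const.
rewrite (_ : #|_| = #|[set f : {ffun 'I_m -> 'I_k} | injectiveb f]|); last first.
  by apply: eq_card => f; rewrite inE.
by rewrite card_inj_ffuns !card_ord mulr_natl.
Qed.

Lemma Esub_val (k q : nat) (lab : 'I_(q * k) -> 'I_n) :
  (0 < m)%N -> (m <= k)%N ->
  @E_sub R m n a k q lab = ('C(q * k, k)%:R)^-1 * ('C(q * k - m, k - m))%:R *
     \det (\sum_t outer (a (lab t))).
Proof.
move=> m0 mk; rewrite /E_sub -mulr_sumr -mulrA; congr (_ * _).
have E1 : forall T : {set 'I_(q * k)},
    fdet a [seq lab t | t <- enum T] ^+ m =
    \sum_(phi : {ffun 'I_m -> 'I_(q * k)})
       (\prod_r (phi r \in T)%:R) * Dd (fun r => lab (phi r)).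
  move=> T; rewrite /fdet big_map big_enum /=.
  rewrite (_ : \sum_(i in T) outer (a (lab i)) =
     \sum_i (i \in T)%:R *: (a (lab i) *m (a (lab i))^T)); last first.
    rewrite big_mkcond /=; apply: eq_bigr => i _.
    by case: (i \in T); rewrite ?scale1r ?scale0r.
  rewrite powR_pow //; last by apply: gram_ge0 => j; apply: ler0n.
  rewrite det_sum_exp; apply: eq_bigr => phi _; rewrite /Dd -det_rowscale.
  by congr (determinant _); apply/matrixP => r c; rewrite !mxE.
under eq_bigr => T _ do rewrite E1.
rewrite exchange_big /= det_sum_exp mulr_sumr; apply: eq_bigr => phi _.
rewrite -mulr_suml.
case: (boolP (injectiveb phi)) => [/injectiveP inj | ninj].
  by congr (_ * _); rewrite count_inj // card_ord.
have /injectivePn [r1 [r2 ne eq]] := ninj.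
have Z : Dd (fun r => lab (phi r)) = 0.
  by apply: (@Dd0 (fun r => lab (phi r)) r1 r2 ne); rewrite /= eq.
by move: Z; rewrite /Dd => ->; rewrite !mulr0.
Qed.

End Main.

Lemma powR_inv (R : realType) (c r : R) : 0 < c -> powR (c^-1) r = (powR c r)^-1.
Proof.
move=> c0.
have ci : 0 <= c^-1 by rewrite invr_ge0 ltW.
have := powRM r ci (ltW c0).
rewrite mulVf ?gt_eqF // powR1 => H.
apply: (@mulIf _ (powR c r)); first by rewrite gt_eqF // powR_gt0.
by rewrite -H mulVf // gt_eqF // powR_gt0.
Qed.

Lemma powR_root (R : realType) (m : nat) (x : R) : (0 < m)%N -> 0 <= x ->
  powR (x ^+ m) (m%:R^-1) = x.
Proof.
move=> m0 x0; rewrite -powR_mulrn // -powRrM mulfV ?powRr1 //.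
by rewrite pnatr_eq0 -lt0n.
Qed.


End Helpers.
Import Helpers.
Local Open Scope ring_scope.

Theorem proposition4 (R : realType) (m k n : nat)
  (a : 'I_n -> 'cV[R]_m) (xh : 'I_n -> rat) (q : nat)
  (lab : 'I_(q * k) -> 'I_n) :
  (0 < m)%N -> (m <= k)%N -> (k <= n)%N ->
  (* xh is a rational optimal solution of the continuous relaxation *)
  (forall i, 0 <= xh i) ->
  \sum_i xh i = k%:R ->
  (forall x : 'I_n -> R, (forall i, 0 <= x i) -> \sum_i x i = k%:R ->
     design_obj a x <= design_obj a (fun i => ratr (xh i))) ->
  (* q is a positive integer with q * xh_i in Z_+ *)
  (0 < q)%N ->
  (forall i, exists c : nat, q%:R * xh i = c%:R) ->
  (* A_q : qk distinct items, exactly q * xh_i of which carry label i *)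
  (forall i, (#|[set t | lab t == i]|)%:R = q%:R * xh i) ->
  let EQ := @E_sub R m n a k q lab in
  let E := E_indep a k (fun i => ratr (xh i)) in
  powR EQ (m%:R^-1) >= powR E (m%:R^-1) /\
  powR E (m%:R^-1) >= (gmk R m k)^-1 * wstar a k /\
  gmk R m k <= Num.min (expR 1) (k%:R / (k - m + 1)%N%:R).
Proof.
move=> m0 mk kn xh0 xhs opt q0 qint cnt EQ E.
have k0 : (0 < k)%N by apply: leq_trans mk.
pose Mh := \sum_i ratr (xh i) *: outer (a i).
have x0 : forall i, (0 : R) <= ratr (xh i) by move=> i; rewrite ler0q.
have dM0 : 0 <= \det Mh by exact: (@gram_ge0 R m _ a _ x0).
have kR : (k%:R : R) != 0 by rewrite pnatr_eq0 -lt0n.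
have Eval : E = (k ^_ m)%:R / (k%:R ^+ m) * \det Mh.
  have s1 : \sum_i ratr (xh i) / k%:R = 1 :> R.
    by rewrite -mulr_suml -rmorph_sum xhs rmorph_nat mulfV.
  have p0 : forall i, (0 : R) <= ratr (xh i) / k%:R.
    by move=> i; rewrite divr_ge0 ?ler0n.
  rewrite /E (Eindep_val a m0 x0 s1).
  have -> : \sum_i (ratr (xh i) / k%:R) *: outer (a i) = k%:R^-1 *: Mh.
    by rewrite scaler_sumr; apply: eq_bigr => i _; rewrite scalerA mulrC.
  by rewrite detZ exprVn mulrA.
have EQval : EQ = ('C(q * k, k)%:R)^-1 * ('C(q * k - m, k - m))%:R *
     (q%:R ^+ m * \det Mh).
  rewrite /EQ Esub_val //; congr (_ * _).
  have -> : \sum_t outer (a (lab t)) = q%:R *: Mh.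
    rewrite (partition_big lab xpredT) //= scaler_sumr; apply: eq_bigr => i _.
    rewrite (eq_bigr (fun _ => outer (a i))); last by move=> t /eqP ->.
    rewrite (eq_bigl (fun t => t \in [set t | lab t == i])); last by move=> t; rewrite inE.
    rewrite sumr_const -scaler_nat -(ratr_nat R #|[set t | lab t == i]|) cnt rmorphM rmorph_nat scalerA //.
  by rewrite detZ.
have C0 : (0 : R) < ('C(q * k, k))%:R by rewrite ltr0n bin_gt0 leq_pmull.
have kmR : (0 : R) < k%:R ^+ m by rewrite exprn_gt0 // ltr0n.
have ffR : (0 : R) < (k ^_ m)%:R by rewrite ltr0n ffact_gt0.
have E0 : 0 <= E by rewrite Eval mulr_ge0 // divr_ge0 ?ler0n ?ltW.
have EQ0 : 0 <= EQ.
  by rewrite EQval !mulr_ge0 ?invr_ge0 ?ler0n ?exprn_ge0.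
have cE : (((k - m)`! * k ^ m)%:R / (k`!)%:R : R) = (k%:R ^+ m) / (k ^_ m)%:R.
  rewrite -(ffact_fact mk) !natrM natrX.
  have f0 : ((k - m)`!)%:R != 0 :> R by rewrite pnatr_eq0 -lt0n fact_gt0.
  have f1 : (k ^_ m)%:R != 0 :> R by rewrite pnatr_eq0 -lt0n ffact_gt0.
  by field; rewrite f1 f0.

have gE : gmk R m k = powR ((k%:R ^+ m) / (k ^_ m)%:R) (m%:R^-1).
  by rewrite /gmk cE.
have c0 : (0 : R) < k%:R ^+ m / (k ^_ m)%:R by rewrite divr_gt0.
split; [|split].
- apply: ge0_ler_powR; rewrite ?nnegrE ?invr_ge0 ?ler0n //.
  rewrite Eval EQval mulrA; apply: ler_wpM2r => //.
  have Hn : ('C(q * k, k) * k ^_ m <= 'C(q * k - m, k - m) * (q ^ m * k ^ m))%N.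
    rewrite bin_ffact_id ?leq_pmull // leq_mul // -expnMn.
    exact: ffact_le_exp.
  rewrite ler_pdivrMr // -(ler_pM2l C0) !mulrA mulfV ?gt_eqF // mul1r.
  by rewrite -!natrX -!natrM ler_nat -mulnA.
- have Einv : E = (k%:R ^+ m / (k ^_ m)%:R)^-1 * \det Mh by rewrite Eval invf_div.
  rewrite Einv powRM ?invr_ge0 ?(ltW c0) // powR_inv // -gE.
  apply: ler_wpM2l; first by rewrite invr_ge0 gE powR_ge0.
  rewrite /wstar.
  apply: (big_ind (fun y => y <= design_obj a (fun i => ratr (xh i)))).
  + exact: powR_ge0.
  + by move=> y z Hy Hz; rewrite ge_max Hy Hz.
  + move=> x /eqP hx; apply: opt; first by move=> i; rewrite ler0n.
    by rewrite -natr_sum hx.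
- rewrite le_min gE; apply/andP; split.
  + rewrite -[X in _ <= X](@powR_root R m (expR 1)) ?expR_ge0 //.
    apply: ge0_ler_powR; rewrite ?nnegrE ?invr_ge0 ?ler0n ?exprn_ge0 ?expR_ge0 ?(ltW c0) //.
    by rewrite ler_pdivrMr // ffact_e.
  + have d0 : (0 : R) <= k%:R / (k - m + 1)%N%:R by rewrite divr_ge0 ?ler0n.
    rewrite -[X in _ <= X](@powR_root R m (k%:R / (k - m + 1)%N%:R)) //.
    apply: ge0_ler_powR; rewrite ?nnegrE ?invr_ge0 ?ler0n ?exprn_ge0 ?(ltW c0) //.
    rewrite expr_div_n ler_pdivrMr // mulrAC ler_pdivlMr ?exprn_gt0 ?ltr0n ?addn1 //.
    rewrite ler_wpM2l ?exprn_ge0 ?ler0n // -natrX ler_nat -addn1.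
    exact: exp_le_ffact.
Qed.
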